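(* Let $\mathfrak{A}$ be a commutative $\mathbb{Q}$-algebra, $A$ a set of non-commutative letters, $\mathfrak{h}^1$ the non-commutative polynomial algebra over $\mathfrak{A}$ generated by $A$, and $\mathfrak{z}\subset\mathfrak{h}^1$ the $\mathfrak{A}$-submodule spanned by $A$, equipped with a commutative (not necessarily unital) $\mathfrak{A}$-algebra product $\circ$. Let $r$ be a variable and $\mathrm{S}^r$ the map on $\mathfrak{h}^1[r]$ described in the context. Then for any $a_1,a_2,\ldots,a_n\in\mathfrak{z}$, $$\mathrm{S}^r(a_1a_2\cdots a_n)=\sum_{i=1}^n r^{i-1}(a_1\circ a_2\circ\cdots\circ a_i)\,\mathrm{S}^r(a_{i+1}\cdots a_n).$$ In particular, for any positive integer $n$ and any $a\in\mathfrak{z}$, $$\mathrm{S}^r(a^n)=\sum_{i=1}^n r^{i-1}a^{\circ i}\,\mathrm{S}^r(a^{n-i}).$$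
   Context: The product $\circ$ on $\mathfrak{z}$ gives an action of $\mathfrak{z}$ on $\mathfrak{h}^1$ (and on $\mathfrak{h}^1[r]$, $r$-linearly) defined by $\mathfrak{A}$-linearity and the rules $a\circ 1_w=0$ and $a\circ(bw)=(a\circ b)w$ for $a,b\in A$ and any word $w$, where $1_w$ is the empty word. The map $\mathrm{S}^r$ is the $\mathfrak{A}[r]$-linear map on $\mathfrak{h}^1[r]$ determined by $\mathrm{S}^r(1_w)=1_w$ and $\mathrm{S}^r(aw)=a\,\mathrm{S}^r(w)+r\,a\circ\mathrm{S}^r(w)$ for all $a\in A$ and words $w$. Juxtaposition denotes the concatenation product of $\mathfrak{h}^1$; $a^n$ is the $n$-fold concatenation power ($a^0=1_w$), and $a^{\circ i}=a\circ\cdots\circ a$ ($i$ factors). *)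

(* Defs.v *)
From HB Require Import structures.
From mathcomp Require Import all_boot all_algebra.
From mathcomp Require Import finmap.
From mathcomp.multinomials Require Import monalg.
Set Implicit Arguments. Unset Strict Implicit. Unset Printing Implicit Defensive.
Import GRing.Theory.
Local Open Scope ring_scope.

(* Letters: A : choiceType.
   h1r  = frakA[r]<A>  = non-commutative polynomials in the letters A with
          coefficients in the polynomial ring {poly R} (variable r = 'X),
          i.e. h^1[r]; concatenation = ring product.
   Zsp  = the free frakA-module on A  (the space z), embedded into h1r by
          zemb. *)

Definition h1r (R : comAlgType rat) (A : choiceType) :=
  {malg {poly R}[{fmonom A}]}.

Definition Zsp (R : comAlgType rat) (A : choiceType) := {malg R[A]}.

Section Defs.
Variables (R : comAlgType rat) (A : choiceType).
Local Notation H := (h1r R A).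
Local Notation Z := (Zsp R A).

Definition letter (a : A) : H := << fmu a >>.

Definition word (w : seq A) : H := << FMonom w >>.

Definition zemb (x : Z) : H :=
  \sum_(a <- msupp x) (x@_a)%:P *: letter a.

Definition zact_word (circ : Z -> Z -> Z) (x : Z) (w : seq A) : H :=
  if w is b :: w' then zemb (circ x << b >>) * word w' else 0.

Definition zact (circ : Z -> Z -> Z) (x : Z) (f : H) : H :=
  \sum_(k <- msupp f) f@_k *: zact_word circ x (fmonom_val k).

Fixpoint Sr_word (circ : Z -> Z -> Z) (w : seq A) : H :=
  if w is a :: w' then
    letter a * Sr_word circ w' + 'X *: zact circ << a >> (Sr_word circ w')
  else 1.

Definition Sr (circ : Z -> Z -> Z) (f : H) : H :=
  \sum_(k <- msupp f) f@_k *: Sr_word circ (fmonom_val k).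

Definition circ_list (circ : Z -> Z -> Z) (a : Z) (s : seq Z) : Z :=
  foldl circ a s.

(* a^{o i} = a o ... o a  (i factors, i >= 1) *)
Definition circ_pow (circ : Z -> Z -> Z) (a : Z) (i : nat) : Z :=
  iter i.-1 (circ a) a.

End Defs.

(* Main.v *)
Require Import Defs.
From HB Require Import structures.
From mathcomp Require Import all_boot all_algebra.
From mathcomp Require Import finmap.
From mathcomp.multinomials Require Import monalg.
Import GRing.Theory.
Local Open Scope ring_scope.

Section Gen.
Variables (K : choiceType) (G : ringType).
Lemma malgUZ (c e : G) (k : K) : c *: << e *g k >> = << c * e *g k >>.
Proof. by apply/malgP => k'; rewrite mcoeffZ !mcoeffU mulrnAr. Qed.

Lemma malgU_scale (e : G) (k : K) : << e *g k >> = e *: << k >>.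
Proof. by rewrite malgUZ mulr1. Qed.

Lemma malg_decomp (f : {malg G[K]}) : f = \sum_(k <- msupp f) f@_k *: << k >>.
Proof. by rewrite {1}(monalgE f); apply: eq_bigr => k _; rewrite malgU_scale. Qed.

Variables (V : zmodType) (sc : G -> K -> V).
Hypothesis sc0 : forall k, sc 0 k = 0.
Lemma lextEw (d : {fset K}) (f : {malg G[K]}) : (msupp f `<=` d)%fset ->
  \sum_(k <- msupp f) sc f@_k k = \sum_(k <- d) sc f@_k k.
Proof.
move=> le; apply: big_fset_incl => // k _ /mcoeff_outdom ->; exact: sc0.
Qed.
End Gen.
Arguments malg_decomp {K G} f.
Arguments malgUZ {K G} c e k.
Arguments malgU_scale {K G} e k.
Arguments lextEw {K G V sc} sc0 {d f} _.

Section S.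
Variables (R : comAlgType rat) (A : choiceType).
Local Notation H := (h1r R A).
Local Notation Z := (Zsp R A).

Lemma HscalerAr (c : {poly R}) (x y : H) : c *: (x * y) = x * (c *: y).
Proof.
rewrite malgME (malgMEw (fsubset_refl _) (msuppZ_le c y)) scaler_sumr.
apply: eq_bigr => k1 _; rewrite scaler_sumr; apply: eq_bigr => k2 _.
by rewrite malgUZ mcoeffZ mulrCA.
Qed.

Lemma lext_lin (phi : {fmonom A} -> H) (c : {poly R}) (f g : H) :
  \sum_(k <- msupp (c *: f + g)) (c *: f + g)@_k *: phi k =
  c *: (\sum_(k <- msupp f) f@_k *: phi k) + \sum_(k <- msupp g) g@_k *: phi k.
Proof.
have sc0 : forall k, (fun (e : {poly R}) k => e *: phi k) 0 k = 0 by move=> k; rewrite scale0r.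
have le1 : (msupp (c *: f + g) `<=` msupp f `|` msupp g)%fset.
  apply: (fsubset_trans (msuppD_le (c *: f) g)); apply: fsetSU; exact: msuppZ_le.
have E1 := lextEw (sc := fun (e : {poly R}) k => e *: phi k) sc0 le1; have E2 := lextEw (sc := fun (e : {poly R}) k => e *: phi k) sc0 (fsubsetUl (msupp f) (msupp g)).
have E3 := lextEw (sc := fun (e : {poly R}) k => e *: phi k) sc0 (fsubsetUr (msupp f) (msupp g)); simpl in E1, E2, E3.
rewrite E1 E2 E3 scaler_sumr -big_split.
by apply: eq_bigr => k _; rewrite mcoeffD mcoeffZ scalerDl scalerA.
Qed.
Lemma lext_U (phi : {fmonom A} -> H) k :
  \sum_(k' <- msupp (<< k >> : H)) (<< k >> : H)@_k' *: phi k' = phi k.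
Proof. by rewrite msuppU1 big_seq_fset1 mcoeffUU scale1r. Qed.

Lemma lin0 {F : H -> H} :
  (forall c f g, F (c *: f + g) = c *: F f + F g) -> F 0 = 0.
Proof.
move=> hF; move: (hF 1 0 0); rewrite scaler0 addr0 scale1r.
by move=> /(congr1 (fun v => v - F 0)); rewrite addrK subrr => /esym.
Qed.

Lemma lin_eq (F G : H -> H) :
  (forall c f g, F (c *: f + g) = c *: F f + F g) ->
  (forall c f g, G (c *: f + g) = c *: G f + G g) ->
  (forall w, F (word R w) = G (word R w)) -> forall f, F f = G f.
Proof.
move=> hF hG hw f.
have F0 := lin0 hF.
have G0 := lin0 hG.
rewrite (malg_decomp f).
suff hs : forall s : seq {fmonom A}, F (\sum_(k <- s) f@_k *: (<< k >> : H)) = G (\sum_(k <- s) f@_k *: (<< k >> : H)) by apply: hs.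
elim => [|k s IH]; first by rewrite !big_nil F0 G0.
rewrite big_cons hF hG IH.
have -> : F << k >> = G << k >> by have := hw (fmonom_val k); rewrite /word fmK.
by [].
Qed.

Lemma lin_sum (F : H -> H) (I : Type) (r : seq I) (c : I -> {poly R}) (v : I -> H) :
  (forall c f g, F (c *: f + g) = c *: F f + F g) ->
  F (\sum_(i <- r) c i *: v i) = \sum_(i <- r) c i *: F (v i).
Proof.
move=> hF.
have F0 := lin0 hF.
by elim: r => [|i r IH]; rewrite ?big_nil ?F0 // !big_cons hF IH.
Qed.


Lemma word_cat w1 w2 : word R w1 * word R w2 = word R (w1 ++ w2) :> H.
Proof. rewrite /word malgM_def fgmulUU mulr1; congr (<< _ >>); exact: fmmulE. Qed.
End S.

Section S2.
Variables (R : comAlgType rat) (A : choiceType).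
Local Notation H := (h1r R A).
Local Notation Z := (Zsp R A).
Variable circ : Z -> Z -> Z.

Lemma letter_word a w : letter R a * word R w = word R (a :: w) :> H.
Proof. by rewrite /letter fmuE -/(word R [:: a]) word_cat. Qed.

Lemma one_word : (1 : H) = word R [::].
Proof. by rewrite /word -fmoneE. Qed.

Lemma Sr_lin c (f g : H) : Sr circ (c *: f + g) = c *: Sr circ f + Sr circ g.
Proof. exact: lext_lin. Qed.

Lemma zact_lin x c (f g : H) : zact circ x (c *: f + g) = c *: zact circ x f + zact circ x g.
Proof. exact: lext_lin. Qed.

Lemma Sr_word_eq w : Sr circ (word R w) = Sr_word circ w.
Proof. by rewrite /Sr /word lext_U. Qed.

Lemma zact_word_eq x w : zact circ x (word R w) = zact_word circ x w.
Proof. by rewrite /zact /word lext_U. Qed.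

Lemma Sr_letter a (f : H) :
  Sr circ (letter R a * f) = letter R a * Sr circ f + 'X *: zact circ << a >> (Sr circ f).
Proof.
apply: (@lin_eq R A (fun f => Sr circ (letter R a * f))
  (fun f => letter R a * Sr circ f + 'X *: zact circ << a >> (Sr circ f))) => [c f' g|c f' g|w] /=.
- by rewrite mulrDr -HscalerAr Sr_lin.
- rewrite Sr_lin mulrDr -HscalerAr zact_lin scalerDr !scalerA mulrC addrACA.
  by rewrite -scalerA -scalerDr.
- by rewrite letter_word !Sr_word_eq.
Qed.
End S2.

Section S3.
Variables (R : comAlgType rat) (A : choiceType).
Local Notation H := (h1r R A).
Local Notation Z := (Zsp R A).
Variable circ : Z -> Z -> Z.
Hypothesis circ_linl : forall (c : R) (x y z : Zsp R A),
      circ (c *: x + y) z = c *: circ x z + circ y z.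
Hypothesis circ_linr : forall (c : R) (x y z : Zsp R A),
      circ x (c *: y + z) = c *: circ x y + circ x z.

Lemma zemb_lin (c : R) (x y : Z) : zemb (c *: x + y) = c%:P *: zemb x + zemb y.
Proof.
have sc0 : forall a : A, (fun (e : R) a => e%:P *: letter R a) 0 a = (0 : H).
  by move=> a; rewrite /= polyC0 scale0r.
have le1 : (msupp (c *: x + y) `<=` msupp x `|` msupp y)%fset.
  apply: (fsubset_trans (msuppD_le (c *: x) y)); apply: fsetSU; exact: msuppZ_le.
have E1 := lextEw (sc := fun (e : R) a => e%:P *: letter R a) sc0 le1.
have E2 := lextEw (sc := fun (e : R) a => e%:P *: letter R a) sc0 (fsubsetUl (msupp x) (msupp y)).
have E3 := lextEw (sc := fun (e : R) a => e%:P *: letter R a) sc0 (fsubsetUr (msupp x) (msupp y)).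
simpl in E1, E2, E3.
rewrite /zemb E1 E2 E3 scaler_sumr -big_split.
by apply: eq_bigr => k _; rewrite mcoeffD mcoeffZ polyCD polyCM scalerDl scalerA.
Qed.

Lemma zemb0 : zemb (0 : Z) = 0.
Proof. by rewrite /zemb msupp0 big_nil. Qed.

Lemma zembU (b : A) : zemb (<< b >> : Z) = letter R b.
Proof. rewrite /zemb msuppU oner_eq0 big_seq_fset1 mcoeffUU polyC1 scale1r. reflexivity. Qed.

Lemma circ0r x : circ x 0 = 0.
Proof.
move: (circ_linr 1 x 0 0); rewrite scaler0 addr0 scale1r.
by move=> /(congr1 (fun v => v - circ x 0)); rewrite addrK subrr => /esym.
Qed.

Lemma circ0l x : circ 0 x = 0.
Proof.
move: (circ_linl 1 0 0 x); rewrite scaler0 addr0 scale1r.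
by move=> /(congr1 (fun v => v - circ 0 x)); rewrite addrK subrr => /esym.
Qed.

Lemma zact_linx (c : R) (x y : Z) (f : H) :
  zact circ (c *: x + y) f = c%:P *: zact circ x f + zact circ y f.
Proof.
rewrite /zact scaler_sumr -big_split; apply: eq_bigr => k _ /=.
rewrite scalerA mulrC -scalerA -scalerDr; congr (_ *: _).
case: (fmonom_val k) => [|b w] /=; first by rewrite scaler0 addr0.
by rewrite circ_linl zemb_lin mulrDl scalerAl.
Qed.

Lemma zact0x (f : H) : zact circ 0 f = 0.
Proof.
rewrite /zact big1 // => k _; case: (fmonom_val k) => [|b w] /=; first by rewrite scaler0.
by rewrite circ0l zemb0 mul0r scaler0.
Qed.

Lemma zact_sumx (s : seq A) (x : Z) (f : H) :
  zact circ (\sum_(a <- s) x@_a *: << a >>) f = \sum_(a <- s) (x@_a)%:P *: zact circ << a >> f.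
Proof.
elim: s => [|a s IH]; first by rewrite !big_nil zact0x.
by rewrite !big_cons zact_linx IH.
Qed.

Lemma zemb_sum (I : Type) (s : seq I) (c : I -> R) (v : I -> Z) :
  zemb (\sum_(i <- s) c i *: v i) = \sum_(i <- s) (c i)%:P *: zemb (v i).
Proof.
elim: s => [|i s IH]; first by rewrite !big_nil zemb0.
by rewrite !big_cons zemb_lin IH.
Qed.

Lemma circ_sumr (I : Type) (s : seq I) (c : I -> R) (v : I -> Z) x :
  circ x (\sum_(i <- s) c i *: v i) = \sum_(i <- s) c i *: circ x (v i).
Proof.
elim: s => [|i s IH]; first by rewrite !big_nil circ0r.
by rewrite !big_cons circ_linr IH.
Qed.

Lemma zact_letter x b (g : H) : zact circ x (letter R b * g) = zemb (circ x << b >>) * g.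
Proof.
apply: (@lin_eq R A (fun g => zact circ x (letter R b * g)) (fun g => zemb (circ x << b >>) * g))
  => [c f' g'|c f' g'|w] /=.
- by rewrite mulrDr -HscalerAr zact_lin.
- by rewrite mulrDr -HscalerAr.
- by rewrite letter_word !zact_word_eq.
Qed.

Lemma sumZ_mull (I : Type) (s : seq I) (c : I -> {poly R}) (v : I -> H) (g : H) :
  (\sum_(i <- s) c i *: v i) * g = \sum_(i <- s) c i *: (v i * g).
Proof. rewrite mulr_suml; apply: eq_bigr => i _; exact/esym/scalerAl. Qed.

Lemma zact_zemb x y (g : H) : zact circ x (zemb y * g) = zemb (circ x y) * g.
Proof.
have E0 := congr1 (circ x) (malg_decomp y).
Timeout 20 have E : circ x y = \sum_(b <- msupp y) y@_b *: circ x << b >> := etrans E0 (circ_sumr _ _ _ _ x).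
Timeout 20 rewrite E zemb_sum.
Timeout 20 rewrite {1}/zemb !sumZ_mull.
Timeout 20 rewrite (@lin_sum R A (zact circ x)); last by move=> *; apply: zact_lin.
apply: eq_bigr => b _. Timeout 20 rewrite zact_letter. reflexivity.
Qed.
Lemma Sr_zemb x (f : H) :
  Sr circ (zemb x * f) = zemb x * Sr circ f + 'X *: zact circ x (Sr circ f).
Proof.
have E0 := congr1 (fun z => zact circ z (Sr circ f)) (malg_decomp x).
Timeout 20 have E : zact circ x (Sr circ f) = \sum_(a <- msupp x) (x@_a)%:P *: zact circ << a >> (Sr circ f) := etrans E0 (zact_sumx _ _ _).
Timeout 20 rewrite E /zemb !sumZ_mull.
Timeout 20 rewrite (@lin_sum R A (Sr circ)); last by move=> *; apply: Sr_lin.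
Timeout 20 rewrite scaler_sumr -big_split; apply: eq_bigr => a _.
Timeout 20 rewrite Sr_letter scalerDr !scalerA mulrC. reflexivity.
Qed.
End S3.

Section S4.
Variables (R : comAlgType rat) (A : choiceType).
Local Notation H := (h1r R A).
Local Notation Z := (Zsp R A).
Variable circ : Z -> Z -> Z.
Hypothesis circ_linl : forall (c : R) (x y z : Zsp R A),
      circ (c *: x + y) z = c *: circ x z + circ y z.
Hypothesis circ_linr : forall (c : R) (x y z : Zsp R A),
      circ x (c *: y + z) = c *: circ x y + circ x z.
Hypothesis circC : forall x y : Zsp R A, circ x y = circ y x.
Hypothesis circA : forall x y z : Zsp R A, circ x (circ y z) = circ (circ x y) z.

Lemma circ_foldl a1 a2 t : circ a1 (foldl circ a2 t) = foldl circ (circ a1 a2) t.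
Proof. by elim: t a2 => [|b t IH] a2 //=; rewrite IH circA. Qed.

Lemma part1 (s : seq Z) (a1 : Z) :
      Sr circ (\prod_(x <- a1 :: s) zemb x)
      = \sum_(j < (size s).+1)
          'X^j *: (zemb (circ_list circ a1 (take j s))
                   * Sr circ (\prod_(x <- drop j s) zemb x)).
Proof.
elim: s a1 => [|a2 s IH] a1.
  rewrite big_cons (@Sr_zemb R A circ circ_linl) big_ord1 big_nil.
  have S1 : Sr circ (1 : H) = 1 by have := @Sr_word_eq R A circ [::]; rewrite -one_word.
  have Z1 : zact circ a1 (1 : H) = 0 by have := @zact_word_eq R A circ a1 [::]; rewrite -one_word.
  rewrite S1 Z1 scaler0 addr0 expr0 scale1r.
  reflexivity.
rewrite big_cons (@Sr_zemb R A circ circ_linl) big_ord_recl /=.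
rewrite expr0 scale1r.
apply: (congr1 (fun v => _ + v)).
rewrite IH (@lin_sum R A (zact circ a1)); last by move=> *; apply: zact_lin.
rewrite scaler_sumr; apply: eq_bigr => i _.
rewrite (@zact_zemb R A circ circ_linr) scalerA -exprS /circ_list circ_foldl add0n.
have -> : bump 0 i = i.+1 by [].
reflexivity.
Qed.

Lemma foldl_nseq (a x : Z) i : foldl circ x (nseq i a) = iter i (circ a) x.
Proof.
elim: i x => [|i IH] x //=.
by rewrite IH (circC x a) -iterSr.
Qed.

Lemma prod_nseq (a : Z) m : \prod_(x <- nseq m a) zemb x = zemb a ^+ m :> H.
Proof.
elim: m => [|m IH]; first by rewrite big_nil expr0.
by rewrite /= big_cons IH exprS.
Qed.

Lemma part2 (n : nat) (a : Zsp R A) : (0 < n)%N ->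
      Sr circ (zemb a ^+ n)
      = \sum_(i < n)
          'X^i *: (zemb (circ_pow circ a i.+1) * Sr circ (zemb a ^+ (n - i.+1))).
Proof.
case: n => [//|n] _.
have -> : zemb a ^+ n.+1 = \prod_(x <- a :: nseq n a) zemb x :> H by rewrite big_cons prod_nseq exprS.
rewrite part1 size_nseq; apply: eq_bigr => i _.
rewrite (take_nseq _ (ltnSE (ltn_ord i))) drop_nseq prod_nseq subSS.
rewrite /circ_list /circ_pow foldl_nseq /=.
reflexivity.
Qed.
End S4.

Theorem lemma2p2 (R : comAlgType rat) (A : choiceType)
  (circ : Zsp R A -> Zsp R A -> Zsp R A)
  (circ_linl : forall (c : R) (x y z : Zsp R A),
      circ (c *: x + y) z = c *: circ x z + circ y z)
  (circ_linr : forall (c : R) (x y z : Zsp R A),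
      circ x (c *: y + z) = c *: circ x y + circ x z)
  (circC : forall x y : Zsp R A, circ x y = circ y x)
  (circA : forall x y z : Zsp R A, circ x (circ y z) = circ (circ x y) z) :
  (forall (a1 : Zsp R A) (s : seq (Zsp R A)),
      Sr circ (\prod_(x <- a1 :: s) zemb x)
      = \sum_(j < (size s).+1)
          'X^j *: (zemb (circ_list circ a1 (take j s))
                   * Sr circ (\prod_(x <- drop j s) zemb x)))
  /\
  (forall (n : nat) (a : Zsp R A), (0 < n)%N ->
      Sr circ (zemb a ^+ n)
      = \sum_(i < n)
          'X^i *: (zemb (circ_pow circ a i.+1) * Sr circ (zemb a ^+ (n - i.+1)))).
Proof.
split=> [a1 s|n a hn].
  by apply: part1.
by apply: part2.
Qed.
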